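(* Let $A$ be a finite-dimensional $k$-algebra and $Y\in\operatorname{mod}A$ such that every short exact sequence $0\to X\to Y'\to S\to0$ with $Y'$ a submodule of $Y$ and $S$ a simple $A$-module is perfect exact. Then $Y^\ast=0$ if and only if $S^\ast=0$ for every composition factor $S$ of $Y$.
   Context: $\operatorname{mod}A$ finitely generated right modules; $(-)^\ast=\operatorname{Hom}_A(-,A)$. A short exact sequence $0\to X\to Y\to Z\to0$ is perfect exact if $0\to Z^\ast\to Y^\ast\to X^\ast\to0$ is exact. *)

(* Defs.v *)
From HB Require Import structures.
From mathcomp Require Import all_boot all_order all_algebra falgebra.
Set Implicit Arguments. Unset Strict Implicit. Unset Printing Implicit Defensive.
Import GRing.Theory.
Local Open Scope ring_scope.

(* Finitely generated right modules over a finite-dimensional k-algebra A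
   (A : falgType k).  Such modules are exactly the finite-dimensional
   k-vector spaces with a unital, associative, k-bilinear right A-action. *)
Record rmod (k : fieldType) (A : falgType k) := RMod {
  rcar :> vectType k;
  ract : rcar -> A -> rcar;
  ract_linl : forall (a : A) (c : k) (m1 m2 : rcar),
      ract (c *: m1 + m2) a = c *: ract m1 a + ract m2 a;
  ract_linr : forall (m : rcar) (c : k) (a1 a2 : A),
      ract m (c *: a1 + a2) = c *: ract m a1 + ract m a2;
  ract1 : forall m : rcar, ract m 1 = m;
  ractA : forall (m : rcar) (a b : A), ract (ract m a) b = ract m (a * b)
}.
Arguments ract {k A} r _ _.

Section Modules.
Variables (k : fieldType) (A : falgType k).

Definition regmod : rmod A.
Proof.
refine (@RMod k A A (fun x a => x * a) _ _ _ _).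
- by move=> a c m1 m2; rewrite mulrDl scalerAl.
- by move=> m c a1 a2; rewrite mulrDr scalerAr.
- exact: mulr1.
- by move=> m a b; rewrite mulrA.
Defined.

Definition is_hom (M N : rmod A) (f : 'Hom(M, N)) : Prop :=
  forall (m : M) (a : A), f (ract M m a) = ract N (f m) a.

(* M^* = Hom_A(M, A);  M^* = 0 means every A-linear map M -> A is zero. *)
Definition dual_zero (M : rmod A) : Prop :=
  forall phi : 'Hom(M, regmod), is_hom phi -> phi = 0.

Definition is_submod (M : rmod A) (U : {vspace M}) : Prop :=
  forall (m : M) (a : A), m \in U -> ract M m a \in U.

Section Submod.
Variables (M : rmod A) (U : {vspace M}) (hU : is_submod U).

Definition subact (u : subvs_of U) (a : A) : subvs_of U :=
  vsproj U (ract M (vsval u) a).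

Lemma subact_val u a : vsval (subact u a) = ract M (vsval u) a.
Proof. by rewrite /subact vsprojK //; apply: hU; exact: subvsP. Qed.

Definition submod : rmod A.
Proof.
refine (@RMod k A (subvs_of U) subact _ _ _ _).
- move=> a c m1 m2; apply: val_inj.
  by rewrite /= !(subact_val, linearD, linearZ) /= ract_linl.
- move=> m c a1 a2; apply: val_inj.
  by rewrite /= !(subact_val, linearD, linearZ) /= ract_linr.
- by move=> m; apply: val_inj; rewrite /= subact_val ract1.
- by move=> m a b; apply: val_inj; rewrite /= !subact_val ractA.
Defined.
End Submod.

Definition simple_mod (S : rmod A) : Prop :=
  (fullv : {vspace S}) != 0%VS /\
  forall U : {vspace S}, is_submod U -> U = 0%VS \/ U = fullv.

Definition short_exact (X Y Z : rmod A) (f : 'Hom(X, Y)) (g : 'Hom(Y, Z)) :=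
  [/\ is_hom f, is_hom g, lker f = 0%VS, limg g = fullv & limg f = lker g].

(* The dual sequence 0 -> Z^* --g^*--> Y^* --f^*--> X^* -> 0 is exact,
   where g^*(phi) = phi o g and f^*(psi) = psi o f. *)
Definition perfect_exact (X Y Z : rmod A) (f : 'Hom(X, Y)) (g : 'Hom(Y, Z)) :=
  [/\ (forall phi : 'Hom(Z, regmod), is_hom phi -> (phi \o g)%VF = 0 -> phi = 0),
      (forall psi : 'Hom(Y, regmod), is_hom psi ->
          ((psi \o f)%VF = 0 <->
           exists2 phi : 'Hom(Z, regmod), is_hom phi & psi = (phi \o g)%VF))
    & (forall chi : 'Hom(X, regmod), is_hom chi ->
          exists2 psi : 'Hom(Y, regmod), is_hom psi & chi = (psi \o f)%VF)].

(* Composition series of M: 0 = M_0 < M_1 < ... < M_n = M, submodules,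
   with each M_{i+1}/M_i simple (i.e. M_i is a maximal proper submodule of
   M_{i+1}). *)
Definition comp_series (M : rmod A) (s : seq {vspace M}) : Prop :=
  [/\ (0 < size s)%N, nth 0%VS s 0 = 0%VS, nth 0%VS s (size s).-1 = fullv,
      (forall i, (i < size s)%N -> is_submod (nth 0%VS s i))
    & (forall i, (i.+1 < size s)%N ->
        (nth 0%VS s i <= nth 0%VS s i.+1)%VS /\ nth 0%VS s i != nth 0%VS s i.+1 /\
        forall W : {vspace M}, is_submod W ->
          (nth 0%VS s i <= W)%VS -> (W <= nth 0%VS s i.+1)%VS ->
          W = nth 0%VS s i \/ W = nth 0%VS s i.+1)].

(* S is isomorphic to V/U (U <= V submodules of M): there is a k-linear
   g : M -> S, A-linear on V, mapping V onto S with kernel (in V) exactly U. *)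
Definition subquot_iso (M S : rmod A) (U V : {vspace M}) (g : 'Hom(M, S)) :=
  [/\ forall (m : M) (a : A), m \in V -> g (ract M m a) = ract S (g m) a,
      (g @: V)%VS = fullv
    & (lker g :&: V)%VS = U].

Definition comp_factor (M S : rmod A) : Prop :=
  exists s : seq {vspace M}, comp_series s /\
  exists i, (i.+1 < size s)%N /\
  exists g : 'Hom(M, S), subquot_iso (nth 0%VS s i) (nth 0%VS s i.+1) g.

End Modules.

(* Main.v *)
Require Import Defs.
From HB Require Import structures.
From mathcomp Require Import all_boot all_order all_algebra falgebra.
From mathcomp Require Import zify.
From Stdlib Require Import Classical.
Set Implicit Arguments. Unset Strict Implicit. Unset Printing Implicit Defensive.
Import GRing.Theory.
Local Open Scope ring_scope.

Lemma ractD (k : fieldType) (A : falgType k) (M : rmod A) (m1 m2 : M) a :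
  ract M (m1 + m2) a = ract M m1 a + ract M m2 a.
Proof. by have := ract_linl (r:=M) a 1 m1 m2; rewrite !scale1r. Qed.

Lemma ract0 (k : fieldType) (A : falgType k) (M : rmod A) a :
  ract M 0 a = 0.
Proof. by apply/(addrI (ract M 0 a)); rewrite -ractD !addr0. Qed.

Lemma ractN (k : fieldType) (A : falgType k) (M : rmod A) (m : M) a :
  ract M (- m) a = - ract M m a.
Proof. by apply/(addrI (ract M m a)); rewrite -ractD !subrr ract0. Qed.

Lemma ractB (k : fieldType) (A : falgType k) (M : rmod A) (m1 m2 : M) a :
  ract M (m1 - m2) a = ract M m1 a - ract M m2 a.
Proof. by rewrite ractD ractN. Qed.

Lemma ractZ (k : fieldType) (A : falgType k) (M : rmod A) c (m : M) a :
  ract M (c *: m) a = c *: ract M m a.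
Proof. by have := ract_linl (r:=M) a c m 0; rewrite !addr0 ract0 addr0. Qed.

Lemma submodB (k : fieldType) (A : falgType k) (M : rmod A) (U : {vspace M}) :
  is_submod U -> forall m1 m2 a, m1 - m2 \in U -> ract M m1 a - ract M m2 a \in U.
Proof. by move=> hU m1 m2 a /(hU _ a); rewrite ractB. Qed.

Lemma quot_exists (k : fieldType) (A : falgType k) (Y : rmod A) (U V : {vspace Y}) :
  is_submod U -> is_submod V -> (U <= V)%VS ->
  exists (S : rmod A) (g : 'Hom(Y, S)), subquot_iso U V g.
Proof.
move=> hU hV sUV.
pose C := (V :\: U)%VS.
pose pi := addv_pi1 V U.
have CU : (C :&: U = 0)%VS by rewrite capv_diff.
have piU u : u \in U -> pi u = 0.
  move=> uU; have h1 : u \in (V + U)%VS by rewrite -[u]addr0 memv_add // ?mem0v ?(subvP sUV).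
  have := @addv_pi1_pi2 _ _ V U u h1; rewrite addv_pi2_id //.
  by move=> /(congr1 (fun x => x - u)); rewrite addrK subrr.
have piC c : c \in C -> pi c = c by move=> cC; apply: daddv_pi_id.
have piV w : w \in V -> w - pi w \in U.
  move=> wV; have h1 : w \in (V + U)%VS by rewrite -[w]addr0 memv_add // ?mem0v.
  have := @addv_pi1_pi2 _ _ V U w h1.
  move=> E; rewrite -{1}E /pi [addv_pi1 _ _ _ + _]addrC addrK; exact: memv_pi2.
have sCV : (C <= V)%VS by apply: diffvSl.
have piact w a : w \in V -> pi (ract Y (pi w) a) = pi (ract Y w a).
  move=> wV; apply/eqP; rewrite -subr_eq0 -linearB /=; apply/eqP/piU.
  rewrite -ractB; apply: hU; rewrite -opprB memvN; exact: piV.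
pose act (c : subvs_of C) (a : A) : subvs_of C := vsproj C (pi (ract Y (vsval c) a)).
have pimem w : pi w \in C by apply: memv_pi.
have cV (c : subvs_of C) : vsval c \in V by apply: (subvP sCV); apply: subvsP.
have actval c a : vsval (act c a) = pi (ract Y (vsval c) a) by rewrite vsprojK.
have L1 : forall a c m1 m2, act (c *: m1 + m2) a = c *: act m1 a + act m2 a.
  move=> a c m1 m2; apply: val_inj => /=.
  by rewrite !actval !linearD !linearZ /= ractD ractZ !linearD !linearZ.
have L2 : forall m c a1 a2, act m (c *: a1 + a2) = c *: act m a1 + act m a2.
  move=> m c a1 a2; apply: val_inj => /=.
  by rewrite !actval ract_linr !linearD !linearZ.
have L3 : forall m, act m 1 = m.
  by move=> m; apply: val_inj; rewrite /= actval ract1 piC // subvsP.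
have L4 : forall m a b, act (act m a) b = act m (a * b).
  move=> m a b; apply: val_inj; rewrite /= !actval piact ?ractA //.
  by apply: hV; apply: cV.
pose S := @RMod k A (subvs_of C) act L1 L2 L3 L4.
exists S.
pose g : 'Hom(Y, S) := (linfun (vsproj C) \o pi)%VF.
have gE m : g m = vsproj C (pi m) by rewrite /g comp_lfunE lfunE.
exists g.
split.
- move=> m a mV; rewrite !gE /= /act vsprojK // piact //.
- apply/vspaceP => s; rewrite memvf.

  have -> : s = (linfun (vsproj C) \o pi)%VF (vsval s).
    by rewrite comp_lfunE lfunE /= piC ?subvsP // vsvalK.
  by apply: memv_img; apply: cV.
- apply/vspaceP => x; rewrite memv_cap memv_ker comp_lfunE lfunE /=.
  apply/idP/idP.
  + case/andP => /eqP h xV.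
    have : pi x = 0 by rewrite -(vsprojK (pimem x)) h linear0.
    by move=> h0; have := piV x xV; rewrite h0 subr0.
  + by move=> xU; rewrite piU // linear0 eqxx (subvP sUV).
Qed.

Lemma sq_simple (k : fieldType) (A : falgType k) (Y S : rmod A) (U V : {vspace Y})
  (g : 'Hom(Y, S)) :
  is_submod V -> (U <= V)%VS -> U != V ->
  (forall W : {vspace Y}, is_submod W -> (U <= W)%VS -> (W <= V)%VS -> W = U \/ W = V) ->
  subquot_iso U V g -> simple_mod S.
Proof.
move=> hV sUV nUV mx [ghom gV gK].
have gVP s : exists2 v, v \in V & s = g v.
  by apply/memv_imgP; rewrite gV memvf.
split.
- apply/eqP => h0; move/eqP: nUV; apply; rewrite -gK.
  apply/vspaceP => x; rewrite memv_cap memv_ker; apply/idP/idP; first by case/andP.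
  move=> xV; rewrite xV andbT; have : g x \in (g @: V)%VS by apply: memv_img.
  by rewrite gV h0 memv0.
- move=> W hW.
  pose W' := (V :&: g @^-1: W)%VS.
  have W'P x : (x \in W') = (x \in V) && (g x \in W) by rewrite memv_cap memv_preim.
  have hW' : is_submod W'.
    move=> m a; rewrite !W'P => /andP [mV mW]; rewrite hV //= ghom //; exact: hW.
  have sUW' : (U <= W')%VS.
    apply/subvP => x xU; rewrite W'P (subvP sUV) //=.
    move: xU; rewrite -gK memv_cap memv_ker => /andP [/eqP -> _]; exact: mem0v.
  have sW'V : (W' <= V)%VS by apply: capvSl.
  case: (mx W' hW' sUW' sW'V) => EW; [left|right]; apply/vspaceP => w.
  + rewrite memv0; apply/idP/idP; last by move/eqP ->; exact: mem0v.
    move=> wW; have [v vV Ew] := gVP w; rewrite Ew in wW *.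
    have : v \in W' by rewrite W'P vV.
    move=> vW'; have : v \in U by rewrite -EW.
    by rewrite -gK memv_cap memv_ker => /andP [].
  + rewrite memvf; have [v vV ->] := gVP w.
    by move: vV; rewrite -EW W'P => /andP [].
Qed.

Definition Hyp (k : fieldType) (A : falgType k) (Y : rmod A) :=
  forall (U : {vspace Y}) (hU : is_submod U) (X S : rmod A)
          (f : 'Hom(X, submod hU)) (g : 'Hom(submod hU, S)),
      simple_mod S -> short_exact f g -> perfect_exact f g.

Lemma step_lemma (k : fieldType) (A : falgType k) (Y : rmod A) (U V : {vspace Y})
  (hU : is_submod U) (hV : is_submod V) (S : rmod A) (g : 'Hom(Y, S)) :
  Hyp Y -> simple_mod S -> (U <= V)%VS -> subquot_iso U V g ->
  dual_zero (submod hV) -> dual_zero (submod hU) /\ dual_zero S.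
Proof.
move=> H sS sUV [ghom gV gK] hDV.
pose f : 'Hom(submod hU, submod hV) := (linfun (vsproj V) \o linfun vsval)%VF.
have fE x : f x = vsproj V (vsval x) by rewrite /f comp_lfunE !lfunE.
pose g' : 'Hom(submod hV, S) := (g \o linfun vsval)%VF.
have g'E y : g' y = g (vsval y) by rewrite /g' comp_lfunE !lfunE.
have uV (x : subvs_of U) : vsval x \in V by apply: (subvP sUV); apply: subvsP.
have SE : short_exact f g'.
  split.
  - by move=> x a; rewrite !fE /= (subact_val hU) /subact vsprojK ?uV.
  - by move=> y a; rewrite !g'E /= (subact_val hV) ghom // subvsP.
  - apply/eqP/lker0P => x y; rewrite !fE => /(congr1 vsval); rewrite !vsprojK //.
    exact: val_inj.
  - apply/vspaceP => s; rewrite memvf.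
    have : s \in (g @: V)%VS by rewrite gV memvf.
    case/memv_imgP => v vV ->.
    have -> : g v = g' (vsproj V v) by rewrite g'E vsprojK.
    by apply: memv_img; rewrite memvf.
  - apply/vspaceP => y; rewrite memv_ker g'E; apply/idP/idP.
    + case/memv_imgP => x _ ->; rewrite fE vsprojK //.
      have : vsval x \in U by apply: subvsP.
      move: (vsval x) => z.
      by rewrite -gK memv_cap memv_ker => /andP [].
    + move=> gy; have yU : vsval y \in U.
        move: (vsval y) (subvsP y) gy => z zV gz; by rewrite -gK memv_cap memv_ker gz.
      have -> : y = f (vsproj U (vsval y)) by rewrite fE vsprojK // vsvalK.
      by apply: memv_img; rewrite memvf.
have [p1 p2 p3] := H V hV _ _ f g' sS SE.
split.
- move=> chi hchi; have [psi hpsi ->] := p3 chi hchi.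
  by rewrite (hDV psi hpsi) comp_lfun0l.
- move=> phi hphi; apply: p1 => //; apply: hDV.
  move=> y a; rewrite !comp_lfunE !lfunE /= -!g'E.
  by case: SE => _ hg _ _ _; rewrite hg hphi.
Qed.

Lemma top_dual (k : fieldType) (A : falgType k) (Y : rmod A) (U : {vspace Y})
  (h : is_submod U) : U = fullv -> dual_zero Y -> dual_zero (submod h).
Proof.
move=> EU hY phi hphi.
pose psi : 'Hom(Y, regmod A) := (phi \o linfun (vsproj U))%VF.
have psiE m : psi m = phi (vsproj U m) by rewrite /psi comp_lfunE lfunE.
have hpsi : is_hom psi.
  by move=> m a; rewrite !psiE -hphi /= /subact vsprojK // EU memvf.
have := hY psi hpsi => p0.
apply/lfunP => u; rewrite -[u]vsvalK -psiE p0 !lfunE /= //.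
Qed.

Lemma dir1 (k : fieldType) (A : falgType k) (Y : rmod A) :
  Hyp Y -> dual_zero Y -> forall S, comp_factor Y S -> dual_zero S.
Proof.
move=> H hY S [s [[sz0 s0 slast ssub sstep] [i [ilt [g gsq]]]]].
have D : forall m j, (size s - j = m.+1)%N ->
    forall h : is_submod (nth 0%VS s j), dual_zero (submod h).
  elim=> [|m IH] j hj h.
  - apply: top_dual hY; have -> : j = (size s).-1 by lia.
    exact: slast.
  - have jlt : (j.+1 < size s)%N by lia.
    have [st [sne mx]] := sstep j jlt.
    have hj1 := ssub j.+1 jlt.
    have [S' [g' sq']] := quot_exists h hj1 st.
    have sS' := sq_simple hj1 st sne mx sq'.
    have [] := step_lemma h H sS' st sq' (IH j.+1 _ hj1) => //.
    lia.
have [st [sne mx]] := sstep i ilt.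
have hi1 := ssub i.+1 ilt.
have hi : is_submod (nth 0%VS s i) by apply: ssub; lia.
have sS := sq_simple hi1 st sne mx gsq.
have [] := step_lemma hi H sS st gsq (D (size s - i.+2)%N i.+1 _ hi1) => //.
lia.
Qed.

Definition stepP (k : fieldType) (A : falgType k) (Y : rmod A) (P Q : {vspace Y}) :=
  (P <= Q)%VS /\ P != Q /\
  forall W : {vspace Y}, is_submod W -> (P <= W)%VS -> (W <= Q)%VS -> W = P \/ W = Q.

Definition good (k : fieldType) (A : falgType k) (Y : rmod A) (t : seq {vspace Y}) :=
  (forall i, (i < size t)%N -> is_submod (nth 0%VS t i)) /\
  (forall i, (i.+1 < size t)%N -> stepP (nth 0%VS t i) (nth 0%VS t i.+1)).

Lemma good_cons (k : fieldType) (A : falgType k) (Y : rmod A) (P : {vspace Y}) t :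
  good t -> is_submod P -> stepP P (nth 0%VS t 0) -> good (P :: t).
Proof.
move=> [g1 g2] hP sp; split => [[|i]|[|i]] /= hi //; first exact: g1.
by apply: g2.

Qed.

Lemma exists_min (Pr : nat -> Prop) :
  (exists n, Pr n) -> exists n, Pr n /\ forall m, Pr m -> (n <= m)%N.
Proof.
move=> [n Pn].
suff : forall N n, (n <= N)%N -> Pr n -> exists n, Pr n /\ forall m, Pr m -> (n <= m)%N.
  by move/(_ n n (leqnn n) Pn).
elim=> [|N IH] n0 hn Pn0.
  by exists n0; split => // m _; lia.
case: (classic (exists m, (m < n0)%N /\ Pr m)) => [[m [hm Pm]]|nex].
  by apply: (IH m) => //; lia.
exists n0; split => // m Pm; rewrite leqNgt; apply/negP => hm; apply: nex.
by exists m.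
Qed.

Lemma min_step (k : fieldType) (A : falgType k) (Y : rmod A) (P Q : {vspace Y}) :
  is_submod Q -> (P <= Q)%VS -> P != Q ->
  exists R, [/\ is_submod R, (R <= Q)%VS & stepP P R].
Proof.
move=> hQ sPQ nPQ.
have [n [[R [hR sPR sRQ nPR dR]] mn]] := @exists_min (fun n =>
  exists R : {vspace Y}, [/\ is_submod R, (P <= R)%VS, (R <= Q)%VS, P != R & \dim R = n])
  (ex_intro _ (\dim Q) (ex_intro _ Q (And5 hQ sPQ (subvv Q) nPQ erefl))).
exists R; split => //; split => //; split => // W hW sPW sWR.
case: (eqVneq W P) => [->|nWP]; [by left|right].
apply/eqP; rewrite eqEdim sWR /= dR; apply: mn.
exists W; split => //; first exact: (subv_trans sWR).
by rewrite eq_sym.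
Qed.

Lemma chainL (k : fieldType) (A : falgType k) (Y : rmod A) (Q : {vspace Y}) t :
  good t -> (0 < size t)%N -> nth 0%VS t 0 = Q ->
  forall P, is_submod P -> (P <= Q)%VS ->
  exists c1, good (c1 ++ t) /\ nth 0%VS (c1 ++ t) 0 = P.
Proof.
move=> gt st tQ.
have hQ : is_submod Q by rewrite -tQ; apply: gt.1.
suff : forall d P, (\dim Q - \dim P <= d)%N -> is_submod P -> (P <= Q)%VS ->
  exists c1, good (c1 ++ t) /\ nth 0%VS (c1 ++ t) 0 = P.
  by move=> H P; apply: (H _ P (leqnn _)).
elim=> [|d IH] P hd hP sPQ.
  case: (eqVneq P Q) => [->|nPQ]; first by exists [::].
  have : (\dim Q <= \dim P)%N by lia.
  by move=> h; move: nPQ; rewrite eqEdim sPQ h.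
case: (eqVneq P Q) => [->|nPQ]; first by exists [::].
have [R [hR sRQ [sPR [nPR mx]]]] := min_step hQ sPQ nPQ.
have dPR : (\dim P < \dim R)%N.
  by move: nPR; rewrite eqEdim sPR /= -ltnNge.
have dRQ := dimvS sRQ.
have [c1 [gc cR]] := IH R ltac:(lia) hR sRQ.
exists (P :: c1); split => //.
rewrite cat_cons; apply: good_cons => //.
by rewrite cR.
Qed.

Lemma dir2 (k : fieldType) (A : falgType k) (Y : rmod A) :
  (forall S, comp_factor Y S -> dual_zero S) -> dual_zero Y.
Proof.
move=> hS phi hphi.
case: (eqVneq phi 0) => // nz; exfalso.
pose K := lker phi.
have hK : is_submod K.
  move=> m a; rewrite !memv_ker hphi => /eqP -> /=; by rewrite mul0r.
have hF : is_submod (fullv : {vspace Y}) by move=> m a _; rewrite memvf.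
have nKF : K != fullv.
  apply/eqP => EK; move/eqP: nz; apply; apply/lfunP => u.
  have : u \in K by rewrite EK memvf.
  by rewrite memv_ker => /eqP ->; rewrite lfunE.
have [R [hR _ [sKR [nKR mxKR]]]] := min_step hF (subvf K) nKF.
have g0 : good [:: (fullv : {vspace Y})].
  by split => [[|i]|i] //= _.
have [c2 [gc2 c2R]] := chainL g0 isT erefl hR (subvf R).
have g1 : good (K :: (c2 ++ [:: fullv])) by apply: good_cons; rewrite // c2R.
have h0 : is_submod (0%VS : {vspace Y}).
  by move=> m a; rewrite memv0 => /eqP ->; rewrite ract0 mem0v.
have [c1 [gc1 c10]] := chainL g1 isT erefl h0 (sub0v K).
pose W : {vspace regmod A} := (phi @: R)%VS.
have hW : is_submod W.
  move=> m a /memv_imgP [v vR ->]; rewrite -(hphi v a); apply: memv_img; exact: hR.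
pose S := submod hW.
pose g : 'Hom(Y, S) := (linfun (vsproj W) \o phi)%VF.
have gE m : g m = vsproj W (phi m) by rewrite /g comp_lfunE lfunE.
have sq : subquot_iso K R g.
  split.
  - move=> m a mR; rewrite !gE /= /subact vsprojK ?memv_img //.
    by rewrite hphi.
  - apply/vspaceP => s; rewrite memvf.
    have : vsval s \in W by apply: subvsP.
    case/memv_imgP => v vR Es.
    have -> : s = g v by rewrite gE -Es vsvalK.
    exact: memv_img.
  - apply/vspaceP => x; rewrite memv_cap !memv_ker gE; apply/idP/idP.
    + case/andP => /eqP h xR.
      have pW : phi x \in W by apply: memv_img.
      by rewrite -(vsprojK pW) h linear0.
    + by move=> /eqP hx; rewrite hx linear0 eqxx (subvP sKR) // memv_ker hx.
pose s := c1 ++ K :: (c2 ++ [:: fullv]).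
have sE : s = rcons (c1 ++ K :: c2) fullv by rewrite /s -cats1 -catA cat_cons.
have cs : comp_series s.
  split.
  - by rewrite /s size_cat /=; lia.
  - exact: c10.
  - by rewrite sE size_rcons /= nth_rcons ltnn eqxx.
  - exact: gc1.1.
  - exact: gc1.2.
have cf : comp_factor Y S.
  exists s; split => //; exists (size c1); split.
    by rewrite /s size_cat /= size_cat /=; lia.
  exists g; rewrite /s !nth_cat ltnn subnn ltnNge leqnSn /= subSnn /=.
  by rewrite c2R.
have dS := hS S cf.
pose psi : 'Hom(S, regmod A) := linfun vsval.
have psiE x : psi x = vsval x by rewrite /psi lfunE.
have hpsi : is_hom psi.
  by move=> x a; rewrite !psiE /= (subact_val hW).
have p0 := dS psi hpsi.
have : ~~ (R <= K)%VS.
  apply: contra nKR => sRK; apply/eqP; apply: subv_anti; by rewrite sKR sRK.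
case/subvPn => x xR xK.
have : psi (g x) = phi x.
  by rewrite psiE gE vsprojK // memv_img.
rewrite p0 lfunE /= => /esym/eqP; rewrite -memv_ker.
by move: xK => /negP.
Qed.

Unset Implicit Arguments.
Close Scope ring_scope.

Theorem mainTheorem16 (k : fieldType) (A : falgType k) (Y : rmod A) :
  (forall (U : {vspace Y}) (hU : is_submod U) (X S : rmod A)
          (f : 'Hom(X, submod hU)) (g : 'Hom(submod hU, S)),
      simple_mod S -> short_exact f g -> perfect_exact f g) ->
  (dual_zero Y <-> forall S : rmod A, comp_factor Y S -> dual_zero S).
Proof.
move=> H; split.
- exact: (dir1 H).
- exact: dir2.
Qed.
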